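(* Let $I$ be an instance of 2-SCSS-$(k,1)$ given by a directed graph $G=(V,E)$ with edge weights $\omega:E\to\mathbb{R}^{\geq 0}$ and terminals $s,t$, and let $I'$ be the Token Game constructed from $I$ as described in the context. Then $\mathrm{OPT}(I)\geq \mathrm{OPT}(I')$.
   Context: 2-SCSS-$(k,1)$: find $k$ paths $F_1,\dots,F_k$ from $s$ to $t$ and one path $B$ from $t$ to $s$ minimizing $\sum_{e\in E}\omega(e)\max\{|\{i: e\in F_i\}|,\ [e\in B]\}$; $\mathrm{OPT}(I)$ is this minimum. The Token Game $I'$: tokens $\mathbf{b},\mathbf{f}_1,\dots,\mathbf{f}_k$; states are vectors $\bar v=(v_0,v_1,\dots,v_k)\in V^{k+1}$ ($v_0$ the location of $\mathbf{b}$, $v_i$ that of $\mathbf{f}_i$); start state $(s,\dots,s)$, end state $(t,\dots,t)$. From each state $\bar v$ the moves are: (Backward) for each edge $(w,v_0)\in E$, move to the state obtained by replacing $v_0$ by $w$, at cost $\omega(w,v_0)$; (Forward) for each $i\in[k]$ and each edge $(v_i,x)\in E$, move to the state obtained by replacing $v_i$ by $x$, at cost $\omega(v_i,x)$; (Flip) for each $i\in[k]$, move to the state obtained by swapping $v_0$ and $v_i$ (new coordinate $0$ is $v_i$, new coordinate $i$ is $v_0$, others unchanged), at cost equal to the weight of a shortest $v_i\leadsto v_0$ path in $G$. $\mathrm{OPT}(I')$ is the minimum total cost of a sequence of moves from the start state to the end state. *)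

(* Defs.v *)
From mathcomp Require Import all_boot all_order all_algebra.
Set Implicit Arguments. Unset Strict Implicit. Unset Printing Implicit Defensive.
Import Order.TTheory GRing.Theory Num.Theory.
Local Open Scope ring_scope.

Section Defs.
Variables (R : realFieldType) (V : finType).
Variables (E : {set V * V}) (w : V -> V -> R).

(* A path from u to v is given by the list p of vertices after u:
   the vertex sequence is u :: p, consecutive pairs are edges of E,
   it ends in v, and vertices are pairwise distinct (simple path). *)
Definition is_path (u v : V) (p : seq V) : bool :=
  [&& path (fun a b => (a, b) \in E) u p, last u p == v & uniq (u :: p)].

Definition path_edges (u : V) (p : seq V) : seq (V * V) := zip (u :: p) p.

Definition path_weight (u : V) (p : seq V) : R :=
  \sum_(e <- path_edges u p) w e.1 e.2.

Definition shortest_dist (u v : V) (d : R) : Prop :=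
  (exists2 p, is_path u v p & path_weight u p = d) /\
  (forall q, is_path u v q -> d <= path_weight u q).

Definition scss_cost (k : nat) (s t : V) (F : 'I_k -> seq V) (B : seq V) : R :=
  \sum_(e in E)
     w e.1 e.2 * Num.max (#|[set i | e \in path_edges s (F i)]|)%:R
                         (e \in path_edges t B)%:R.

Definition scss_feasible_cost (k : nat) (s t : V) (c : R) : Prop :=
  exists (F : 'I_k -> seq V) (B : seq V),
    [/\ forall i, is_path s t (F i), is_path t s B & c = scss_cost s t F B].

(* A state (v_0, v_1, ..., v_k): coordinate 0 is the token b,
   coordinate lift ord0 i (= i+1) is the token f_{i+1}. *)
Definition tstate (k : nat) := {ffun 'I_k.+1 -> V}.

Definition tset (k : nat) (x : tstate k) (j : 'I_k.+1) (a : V) : tstate k :=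
  [ffun l => if l == j then a else x l].

Definition tswap (k : nat) (x : tstate k) (j : 'I_k.+1) : tstate k :=
  [ffun l => if l == ord0 then x j else if l == j then x ord0 else x l].

Inductive tmove (k : nat) : tstate k -> tstate k -> R -> Prop :=
  | tm_backward (x : tstate k) (a : V) :
      (a, x ord0) \in E -> tmove x (tset x ord0 a) (w a (x ord0))
  | tm_forward (x : tstate k) (i : 'I_k) (a : V) :
      (x (lift ord0 i), a) \in E ->
      tmove x (tset x (lift ord0 i) a) (w (x (lift ord0 i)) a)
  | tm_flip (x : tstate k) (i : 'I_k) (d : R) :
      shortest_dist (x (lift ord0 i)) (x ord0) d ->
      tmove x (tswap x (lift ord0 i)) d.

Inductive tplay (k : nat) : tstate k -> tstate k -> R -> Prop :=
  | tp_nil (x : tstate k) : tplay x x 0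
  | tp_cons (x y z : tstate k) (c1 c2 : R) : tmove x y c1 -> tplay y z c2 -> tplay x z (c1 + c2).

Definition token_feasible_cost (k : nat) (s t : V) (c : R) : Prop :=
  tplay [ffun _ : 'I_k.+1 => s] [ffun _ : 'I_k.+1 => t] c.

End Defs.

(* Main.v *)
Require Import Defs.
From mathcomp Require Import all_boot all_order all_algebra zify.
Set Implicit Arguments. Unset Strict Implicit. Unset Printing Implicit Defensive.
Import Order.TTheory GRing.Theory Num.Theory.

Section PathAux.
Variables (V : finType) (E : {set V * V}).
Local Notation erel := (fun a b : V => (a, b) \in E).

Lemma pe_cons (x y : V) p : path_edges x (y :: p) = (x, y) :: path_edges y p.
Proof. by []. Qed.

Lemma pe_nil (x : V) : path_edges x [::] = [::].
Proof. by []. Qed.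

Lemma pe_cat (x : V) p1 p2 :
  path_edges x (p1 ++ p2) = path_edges x p1 ++ path_edges (last x p1) p2.
Proof.
elim: p1 x => [|y p1 IH] x /=; first by [].
by rewrite /path_edges /= -/(path_edges y (p1 ++ p2)) IH.
Qed.

Lemma pe_mem (x : V) p a b : (a, b) \in path_edges x p -> (a \in x :: p) /\ (b \in p).
Proof.
elim: p x => [|y p IH] x //=.
rewrite pe_cons in_cons => /orP[/eqP[-> ->]|/IH [H1 H2]].
  by rewrite !inE !eqxx.
by split; rewrite inE ?H1 ?H2 ?orbT.
Qed.

Lemma pe_inE (x : V) p e : path erel x p -> e \in path_edges x p -> e \in E.
Proof.
elim: p x => [|y p IH] x //=.
move=> /andP[Hxy Hp]; rewrite pe_cons in_cons => /orP[/eqP->//|].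
exact: IH.
Qed.

Lemma pe_uniq (x : V) p : uniq (x :: p) -> uniq (path_edges x p).
Proof. move=> H; exact: zip_uniql. Qed.

Lemma count_pe_le1 (x : V) p e : uniq (x :: p) -> count_mem e (path_edges x p) <= 1.
Proof. by move=> H; rewrite count_uniq_mem ?pe_uniq // leq_b1. Qed.

Lemma mem_split (T : eqType) (x : T) (s : seq T) :
  x \in s -> exists s1 s2, s = s1 ++ x :: s2.
Proof. by case/splitPr => s1 s2; exists s1, s2. Qed.

Lemma walk_split (x : V) p y : y \in x :: p ->
  exists p1 p2, p = p1 ++ p2 /\ last x p1 = y.
Proof.
rewrite in_cons => /orP[/eqP->|]; first by exists [::], p.
case/mem_split => s1 [s2 ->]; exists (rcons s1 y), s2.
by rewrite cat_rcons last_rcons.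
Qed.

Lemma is_path_cat (x y : V) p1 p2 : is_path E x y (p1 ++ p2) ->
  is_path E x (last x p1) p1 /\ is_path E (last x p1) y p2.
Proof.
rewrite /is_path cat_path last_cat => /and3P[/andP[Hp1 Hp2] Hl Hu].
have Hu' : uniq ((x :: p1) ++ p2) by [].
rewrite cat_uniq in Hu'; case/and3P: Hu' => Hu1 Hd Hu2.
split; first by rewrite Hp1 eqxx Hu1.
rewrite Hp2 Hl /= Hu2 andbT.
apply/negP => Hin; move/negP: Hd; apply; apply/hasP; exists (last x p1) => //.
by rewrite mem_last.
Qed.

Lemma suffix_walk (y x : V) q s1 s2 : y :: q = s1 ++ x :: s2 -> path erel y q ->
  [/\ path erel x s2, last x s2 = last y q & {subset path_edges x s2 <= path_edges y q}].
Proof.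
case: s1 => [|z s1] /= [Ey Eq]; first by subst; split.
subst; rewrite cat_path /= => /andP[_ /andP[_ Hp]]; split => //.
  by rewrite last_cat.
by move=> e He; rewrite pe_cat pe_cons mem_cat in_cons He !orbT.
Qed.

Lemma shortcut p (x : V) : path erel x p ->
  exists q, is_path E x (last x p) q /\ {subset path_edges x q <= path_edges x p}.
Proof.
elim: p x => [|y p IH] x /=.
  by move=> _; exists [::]; rewrite /is_path /= eqxx.
move=> /andP[Hxy Hp]; have [q [Hq Hsub]] := IH y Hp.
move: Hq; rewrite /is_path => /and3P[Hpq Hlq Huq].
case Hx: (x \in y :: q).
  have [s1 [s2 Es]] := mem_split Hx.
  have [Hp2 Hl2 Hs2] := suffix_walk Es Hpq.
  exists s2; split.
    rewrite /= Hp2 Hl2 (eqP Hlq) eqxx /=.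
    move: Huq; rewrite Es cat_uniq => /and3P[_ _]; by [].
  move=> e /Hs2 /Hsub He; by rewrite pe_cons in_cons He orbT.
exists (y :: q); split.
  rewrite /is_path /= Hxy Hpq Hlq /=; move: Huq Hx => /= -> ->; by [].
move=> e; rewrite !pe_cons !in_cons => /orP[->//|/Hsub ->]; by rewrite orbT.
Qed.

Local Open Scope ring_scope.
Variables (R : realFieldType) (w : V -> V -> R).
Hypothesis hw : forall u v, (u, v) \in E -> 0 <= w u v.

Lemma pw_cons (x y : V) p : path_weight w x (y :: p) = w x y + path_weight w y p.
Proof. by rewrite /path_weight pe_cons big_cons. Qed.

Lemma pw_ge0 (x : V) p : path erel x p -> 0 <= path_weight w x p.
Proof.
elim: p x => [|y p IH] x /=; first by rewrite /path_weight big_nil.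
by move=> /andP[H1 H2]; rewrite pw_cons addr_ge0 ?hw ?IH.
Qed.

Fixpoint allseq (n : nat) : seq (seq V) :=
  if n is n'.+1 then [::] :: [seq a :: s | a <- enum V, s <- allseq n'] else [:: [::]].

Lemma mem_allseq n (s : seq V) : (size s <= n)%N -> s \in allseq n.
Proof.
elim: n s => [|n IH] [|a s] //=; rewrite ?inE //.
move=> Hs; apply/orP; right.
apply/allpairsP; exists (a, s) => /=; split => //; first by rewrite mem_enum.
exact: IH.
Qed.

Lemma exists_min (T : eqType) (f : T -> R) (l : seq T) : l != [::] ->
  exists2 m, m \in l & forall x, x \in l -> f m <= f x.
Proof.
elim: l => [|a l IH] //= _.
case: (altP (l =P [::])) => [->|Hl].
  by exists a; rewrite ?inE // => x; rewrite inE => /eqP->.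
have [m Hm Hmin] := IH Hl.
case: (lerP (f a) (f m)) => Ham.
  exists a; first by rewrite inE eqxx.
  move=> x; rewrite inE => /orP[/eqP->//|/Hmin]; exact: le_trans.
exists m; first by rewrite inE Hm orbT.
move=> x; rewrite inE => /orP[/eqP->|/Hmin//]; exact: ltW.
Qed.

Lemma exists_shortest (x y : V) q : is_path E x y q ->
  exists d, shortest_dist E w x y d /\ d <= path_weight w x q.
Proof.
move=> Hq.
pose L := [seq p <- allseq #|V| | is_path E x y p].
have Hsz : forall p, is_path E x y p -> p \in L.
  move=> p Hp; rewrite mem_filter Hp /=; apply: mem_allseq.
  move: Hp => /and3P[_ _ Hu].
  have := Hu; rewrite /= => /andP[_ Hu'].
  by rewrite -(card_uniqP Hu') max_card.
have HL : L != [::] by apply/negP => /eqP HL; have := Hsz q Hq; rewrite HL.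
have [m Hm Hmin] := exists_min (path_weight w x) HL.
exists (path_weight w x m); split; last by apply: Hmin; exact: Hsz.
split; first by exists m => //; move: Hm; rewrite mem_filter => /andP[].
by move=> p Hp; apply: Hmin; exact: Hsz.
Qed.

Lemma sum_list_E (l : seq (V * V)) : {subset l <= E} ->
  \sum_(e <- l) w e.1 e.2 = \sum_(e in E) w e.1 e.2 * (count_mem e l)%:R.
Proof.
elim: l => [|a l IH] Hs.
  by rewrite big_nil big1 // => e _; rewrite mulr0.
rewrite big_cons IH; last by move=> e He; apply: Hs; rewrite inE He orbT.
have HaE : a \in E by apply: Hs; rewrite inE eqxx.
rewrite (bigD1 a HaE) [in RHS](bigD1 a HaE) /= eqxx addrA.
congr (_ + _).
  by rewrite add1n -addn1 natrD mulrDr mulr1 addrC.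
apply: eq_bigr => e /andP[_ /negbTE Hne].
by rewrite eq_sym Hne.
Qed.

End PathAux.

Section Game.
Local Open Scope ring_scope.
Variables (R : realFieldType) (V : finType) (E : {set V * V}) (w : V -> V -> R).
Hypothesis hw : forall u v, (u, v) \in E -> 0 <= w u v.
Variables (k : nat) (t : V).
Local Notation erel := (fun a b : V => (a, b) \in E).
Local Notation st_t := (tstate V k).

Definition ecnt (x : V) p (e : V * V) : nat := count_mem e (path_edges x p).
Definition nF (st : st_t) (Fs : 'I_k -> seq V) e : nat :=
  (\sum_(i < k) ecnt (st (lift ord0 i)) (Fs i) e)%N.
Definition Phi (H : V * V -> nat) : R := \sum_(e in E) w e.1 e.2 * (H e)%:R.
Definition mu (H : V * V -> nat) : nat := (\sum_(e in E) H e)%N.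
Definition Wit (H : V * V -> nat) (st : st_t) Fs B :=
  [/\ forall i, is_path E (st (lift ord0 i)) t (Fs i), is_path E t (st ord0) B
    & forall e, (maxn (nF st Fs e) (ecnt t B e) <= H e)%N].
Definition Good H st := exists Fs B, Wit H st Fs B.
Definition upd (Fs : 'I_k -> seq V) j p := fun i => if i == j then p else Fs i.

Definition StepOK H (st : st_t) := exists st' c1 H',
  [/\ tmove E w st st' c1, Good H' st', c1 + Phi H' <= Phi H & (mu H' < mu H)%N].

Lemma Phi_ge0 H : 0 <= Phi H.
Proof.
rewrite /Phi; apply: sumr_ge0 => [[a b]] /= HE; apply: mulr_ge0 => //.
exact: hw.
Qed.

Lemma consume H (l : seq (V * V)) : {subset l <= E} -> l != [::] ->
  (forall e, count_mem e l <= H e)%N ->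
  Phi (fun e => H e - count_mem e l)%N + \sum_(e <- l) w e.1 e.2 = Phi H /\
  (mu (fun e => H e - count_mem e l)%N < mu H)%N.
Proof.
move=> Hs Hl Hc; split.
  rewrite (@sum_list_E _ E _ w l Hs) /Phi -big_split /=; apply: eq_bigr => e _.
  by rewrite -mulrDr -natrD subnK.
case: l Hl Hs Hc => [//|a l] _ Hs Hc.
have HaE : a \in E by apply: Hs; rewrite inE eqxx.
rewrite /mu (bigD1 a HaE) [X in (_ < X)%N](bigD1 a HaE) /=.
have Ha := Hc a; rewrite /= eqxx /= in Ha.
rewrite -addSn leq_add //; last first.
  by apply: leq_sum => e _; apply: leq_subr.
by rewrite /= eqxx add1n subnS prednK ?subn_gt0 // leq_subr.
Qed.

Lemma nF_D1 st Fs j e : nF st Fs e =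
  (ecnt (st (lift ord0 j)) (Fs j) e +
   \sum_(i < k | i != j) ecnt (st (lift ord0 i)) (Fs i) e)%N.
Proof. by rewrite /nF (bigD1 j). Qed.

Lemma rest_eq (st st' : st_t) Fs Fs' j e :
  (forall i, i != j -> st' (lift ord0 i) = st (lift ord0 i) /\ Fs' i = Fs i) ->
  (\sum_(i < k | i != j) ecnt (st' (lift ord0 i)) (Fs' i) e =
   \sum_(i < k | i != j) ecnt (st (lift ord0 i)) (Fs i) e)%N.
Proof. by move=> Hs; apply: eq_bigr => i /Hs [-> ->]. Qed.

Lemma ecnt_cat x p1 p2 e : ecnt x (p1 ++ p2) e = (ecnt x p1 e + ecnt (last x p1) p2 e)%N.
Proof. by rewrite /ecnt pe_cat count_cat. Qed.

Lemma ecnt_cons x y p e : ecnt x (y :: p) e = (((x, y) == e) + ecnt y p e)%N.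
Proof. by rewrite /ecnt pe_cons /=. Qed.

Lemma lift_eq (i j : 'I_k) : (lift ord0 i == lift ord0 j) = (i == j).
Proof. exact: (inj_eq (@lift_inj _ ord0)). Qed.

Lemma lift_neq0 (i : 'I_k) : (lift ord0 i == ord0) = false.
Proof. by apply/negbTE; rewrite eq_sym neq_lift. Qed.

Lemma tset_lift (st : st_t) j a i :
  tset st (lift ord0 j) a (lift ord0 i) = if i == j then a else st (lift ord0 i).
Proof. by rewrite /tset ffunE lift_eq. Qed.

Lemma tset_lift0 (st : st_t) j a : tset st (lift ord0 j) a ord0 = st ord0.
Proof. by rewrite /tset ffunE eq_sym lift_neq0. Qed.

Lemma tset0_lift (st : st_t) a i : tset st ord0 a (lift ord0 i) = st (lift ord0 i).
Proof. by rewrite /tset ffunE lift_neq0. Qed.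

Lemma tset0_0 (st : st_t) a : tset st ord0 a ord0 = a.
Proof. by rewrite /tset ffunE eqxx. Qed.

Lemma tswap_lift (st : st_t) j i :
  tswap st (lift ord0 j) (lift ord0 i) = if i == j then st ord0 else st (lift ord0 i).
Proof. by rewrite /tswap ffunE lift_neq0 lift_eq. Qed.

Lemma tswap_0 (st : st_t) j : tswap st (lift ord0 j) ord0 = st (lift ord0 j).
Proof. by rewrite /tswap ffunE eqxx. Qed.

Lemma upd_same Fs j p : upd Fs j p j = p.
Proof. by rewrite /upd eqxx. Qed.

Lemma upd_other Fs j p i : i != j -> upd Fs j p i = Fs i.
Proof. by rewrite /upd => /negbTE ->. Qed.

Lemma stepA H st Fs B j a p : Wit H st Fs B -> Fs j = a :: p ->
  (ecnt t B (st (lift ord0 j), a) < nF st Fs (st (lift ord0 j), a))%N -> StepOK H st.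
Proof.
move=> [HF HB HH] Ej Hlt.
set vj := st (lift ord0 j) in Hlt *.
set ej := (vj, a) in Hlt *.
have HFj := HF j; rewrite Ej in HFj.
move: (HFj) => /and3P[/= /andP[HejE Hpp] Hl Hu].
have Hpa : is_path E a t p by rewrite /is_path Hpp Hl; move: Hu => /= /andP[].
set st' := tset st (lift ord0 j) a.
set Fs' := upd Fs j p.
have HnF : forall e, nF st Fs e = (nF st' Fs' e + (ej == e))%N.
  move=> e; rewrite (nF_D1 st Fs j) (nF_D1 st' Fs' j) (@rest_eq st st' Fs Fs').
    rewrite /st' /Fs' tset_lift eqxx upd_same Ej ecnt_cons.
    by rewrite -addnA addnC.
  by move=> i Hi; rewrite /st' /Fs' tset_lift (negbTE Hi) upd_other.
have Hc : forall e, (count_mem e [:: ej] <= H e)%N.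
  move=> e /=; case: eqP => [<-|_] //.
  have := HH ej; rewrite HnF eqxx; lia.
have Hs : {subset [:: ej] <= E} by move=> e; rewrite inE => /eqP->.
have [HPhi Hmu] := consume Hs isT Hc.
exists st', (w vj a), (fun e => H e - count_mem e [:: ej])%N; split => //.
- exact: tm_forward.
- exists Fs', B; split.
  + move=> i; rewrite /st' tset_lift /Fs' /upd; case: (i == j) => //; exact: HF.
  + by rewrite /st' tset_lift0.
  + move=> e; have := HH e; rewrite HnF /=.
    case: eqP => [<-|_]; last by rewrite !addn0 subn0.
    move: Hlt; rewrite HnF eqxx; lia.
- by rewrite -HPhi big_seq1 addrC.
Qed.

Lemma stepB H st Fs B0 u : Wit H st Fs (rcons B0 u) ->
  (nF st Fs (last t B0, u) < ecnt t (rcons B0 u) (last t B0, u))%N -> StepOK H st.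
Proof.
move=> [HF HB HH] Hlt.
set u' := last t B0 in Hlt *.
set eb := (u', u) in Hlt *.
have Hu : st ord0 = u by move: HB => /and3P[_ /eqP <- _]; rewrite last_rcons.
have HB' := HB; rewrite -cats1 in HB'.
have [HB0 _] := is_path_cat HB'.
have Hbc : forall e, ecnt t (rcons B0 u) e = (ecnt t B0 e + (eb == e))%N.
  by move=> e; rewrite -cats1 ecnt_cat /ecnt /= addn0.
have HebE : eb \in E.
  apply: (@pe_inE _ E t (rcons B0 u)); first by case/and3P: HB.
  by rewrite -cats1 pe_cat mem_cat /= inE eqxx orbT.
set st' := tset st ord0 u'.
have HnF : forall e, nF st' Fs e = nF st Fs e.
  by move=> e; apply: eq_bigr => i _; rewrite /st' tset0_lift.
have Hc : forall e, (count_mem e [:: eb] <= H e)%N.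
  move=> e /=; case: eqP => [<-|_] //.
  have := HH eb; rewrite Hbc eqxx; lia.
have Hs : {subset [:: eb] <= E} by move=> e; rewrite inE => /eqP->.
have [HPhi Hmu] := consume Hs isT Hc.
exists st', (w u' u), (fun e => H e - count_mem e [:: eb])%N; split => //.
- rewrite /st' -Hu; apply: tm_backward; by rewrite Hu.
- exists Fs, B0; split.
  + by move=> i; rewrite /st' tset0_lift; exact: HF.
  + by rewrite /st' tset0_0.
  + move=> e; have := HH e; rewrite HnF Hbc /=.
    case: eqP => [<-|_]; last by rewrite !addn0 subn0.
    move: Hlt; rewrite Hbc eqxx; lia.
- by rewrite -HPhi big_seq1 addrC.
Qed.

Lemma cnt_gt0 (e : V * V) s : (0 < count_mem e s)%N = (e \in s).
Proof. by rewrite -has_count has_pred1. Qed.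

Lemma ar1 (n b c H : nat) : (c <= 1)%N -> (0 < b)%N -> (maxn n b <= H)%N -> (maxn n c <= H)%N.
Proof. lia. Qed.
Lemma ar2 (n b c H : nat) : (c <= 1)%N -> (0 < n)%N -> (maxn n b <= H)%N -> (maxn n c <= H)%N.
Proof. lia. Qed.
Lemma ar0 (n b H : nat) : (maxn n b <= H)%N -> (maxn n 0 <= H)%N.
Proof. lia. Qed.
Lemma ar3 (r f s b H : nat) : (maxn (r + f + s) b <= H)%N -> (r <= H)%N.
Proof. lia. Qed.
Lemma ar4 (r f s b1 b2 H : nat) : (maxn (r + f + s) (b1 + b2) <= H)%N ->
  ((0 < r)%N -> b1 = 0%N) -> (maxn (f + s) b1 <= H - r)%N.
Proof. lia. Qed.

Lemma stepC H st Fs B j a p : Wit H st Fs B -> Fs j = a :: p ->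
  st ord0 \in Fs j -> st (lift ord0 j) \in t :: B -> StepOK H st.
Proof.
move=> Hw Ej Hu Hv; have [HF HB HH] := Hw.
set vj := st (lift ord0 j) in Hv *; set u := st ord0 in Hu *.
have HFj := HF j.
have Hnvj : vj \notin Fs j by move: HFj => /and3P[_ _ /= /andP[]].
have [Rp [Fj' [EFj HlR]]] : exists Rp Fj', Fs j = Rp ++ Fj' /\ last vj Rp = u.
  by apply: walk_split; rewrite inE Hu orbT.
have HFj2 := HFj; rewrite EFj in HFj2.
have [HR HFj'] := is_path_cat HFj2; rewrite HlR in HR HFj'.
have [B1 [B2 [EB HlB]]] := walk_split Hv.
have HB' := HB; rewrite EB in HB'.
have [HB1 _] := is_path_cat HB'; rewrite HlB in HB1.
have HnF1 : (0 < nF st Fs (vj, a))%N.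
  by rewrite (nF_D1 st Fs j) Ej ecnt_cons eqxx.
have HRsub : forall y, y \in Rp -> y \in Fs j by move=> y Hy; rewrite EFj mem_cat Hy.
have HReF : forall e, e \in path_edges vj Rp -> e \in path_edges vj (Fs j).
  by move=> e He; rewrite EFj pe_cat mem_cat He.
have HB1eB : forall e, e \in path_edges t B1 -> e \in path_edges t B.
  by move=> e He; rewrite EB pe_cat mem_cat He.
case Hhas: (has (fun e => e \in path_edges t B1) (path_edges vj Rp)).
- case/hasP: Hhas => [[x1 x2]] HxR HxB.
  have [_ Hx2B] := pe_mem HxB.
  have [_ Hx2R] := pe_mem HxR.
  have [B1a [B1b [EB1 HlB1]]] : exists B1a B1b, B1 = B1a ++ B1b /\ last t B1a = x2.
    by apply: walk_split; rewrite inE Hx2B orbT.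
  have [Ra [Rb [ER HlR']]] : exists Ra Rb, Rp = Ra ++ Rb /\ last vj Ra = x2.
    by apply: walk_split; rewrite inE Hx2R orbT.
  have Hpw : path erel t (B1a ++ Rb).
    rewrite cat_path HlB1; apply/andP; split.
      by move: HB1 => /and3P[+ _ _]; rewrite EB1 cat_path => /andP[].
    by move: HR => /and3P[+ _ _]; rewrite ER cat_path HlR' => /andP[].
  have [Bs [HBs Hsub]] := shortcut Hpw.
  have Hl : last t (B1a ++ Rb) = u by rewrite last_cat HlB1 -HlR' -last_cat -ER.
  rewrite Hl in HBs.
  have HuBs : uniq (t :: Bs) by case/and3P: HBs.
  have HsubE : forall e, e \in path_edges t Bs ->
      e \in path_edges t B \/ e \in path_edges vj (Fs j).
    move=> e /Hsub; rewrite pe_cat mem_cat HlB1 => /orP[He|He].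
      by left; apply: HB1eB; rewrite EB1 pe_cat mem_cat He.
    by right; apply: HReF; rewrite ER pe_cat mem_cat HlR' He orbT.
  apply: (@stepA H st Fs Bs j a p) => //.
    split => // e; have := HH e.
    have := count_pe_le1 e HuBs; rewrite -/(ecnt t Bs e).
    case Hin: (e \in path_edges t Bs); last first.
      by rewrite /ecnt count_uniq_mem ?pe_uniq // Hin => _; apply: ar0.
    case: (HsubE e Hin) => He.
      have Hb : (0 < ecnt t B e)%N by rewrite /ecnt cnt_gt0.
      move=> Hc1; exact: ar1 Hc1 Hb.
    have : (0 < nF st Fs e)%N.
      by rewrite (nF_D1 st Fs j) -/vj; apply: ltn_addr; rewrite /ecnt cnt_gt0.
    move=> Hn Hc1; exact: ar2 Hc1 Hn.
  suff Hn : (vj, a) \notin path_edges t Bs.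
    by rewrite /ecnt count_uniq_mem ?pe_uniq // (negbTE Hn).
  apply/negP => /Hsub; rewrite pe_cat mem_cat HlB1 => /orP[He|He].
    have [Hvt _] := pe_mem He.
    case: B1b EB1 => [|c B1b] EB1.
      by move: HlB; rewrite EB1 cats0 HlB1 => Hx; move: Hnvj; rewrite -Hx HRsub.
    have Hvl : vj \in (c :: B1b) ++ B2.
      by rewrite -HlB EB1 last_cat /= -cat_cons mem_cat mem_last.
    move: HB => /and3P[_ _]; rewrite EB EB1 -catA -cat_cons cat_uniq.
    case/and3P => _ /hasP Hd _; apply: Hd; exists vj => //.
  have [Hvt _] := pe_mem He.
  move: Hvt; rewrite inE => /orP[/eqP Hx|Hx].
    by move: Hnvj; rewrite Hx HRsub.
  by move: Hnvj; rewrite HRsub // ER mem_cat Hx orbT.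
- have HR0 : Rp != [::].
    apply/negP => /eqP HR0; move: HlR; rewrite HR0 /= => Hx.
    by move: Hnvj; rewrite Hx Hu.
  have [d [Hd Hdle]] := @exists_shortest _ E _ w _ _ _ HR.
  set l := path_edges vj Rp.
  have Hs : {subset l <= E} by move=> e; apply: pe_inE; case/and3P: HR.
  have Hl0 : l != [::] by rewrite /l; move: HR0; case: (Rp).
  have HnFs : forall e, nF st Fs e = (ecnt vj Rp e + ecnt u Fj' e +
      \sum_(i < k | i != j) ecnt (st (lift ord0 i)) (Fs i) e)%N.
    by move=> e; rewrite (nF_D1 st Fs j) -/vj EFj ecnt_cat HlR.
  have Hc : forall e, (count_mem e l <= H e)%N.
    move=> e; have := HH e; rewrite HnFs -/(ecnt vj Rp e); exact: ar3.
  have [HPhi Hmu] := consume Hs Hl0 Hc.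
  set st' := tswap st (lift ord0 j).
  set Fs' := upd Fs j Fj'.
  exists st', d, (fun e => H e - count_mem e l)%N; split => //.
  + exact: tm_flip.
  + exists Fs', B1; split.
    * move=> i; rewrite /st' tswap_lift /Fs' /upd; case: (i == j) => //; exact: HF.
    * by rewrite /st' tswap_0.
    * move=> e; have := HH e.
      have -> : nF st' Fs' e = (ecnt u Fj' e +
          \sum_(i < k | i != j) ecnt (st (lift ord0 i)) (Fs i) e)%N.
        rewrite (nF_D1 st' Fs' j) (@rest_eq st st' Fs Fs').
          by rewrite /st' /Fs' tswap_lift eqxx upd_same.
        by move=> i Hi; rewrite /st' /Fs' tswap_lift (negbTE Hi) upd_other.
      have HBc : ecnt t B e = (ecnt t B1 e + ecnt vj B2 e)%N by rewrite EB ecnt_cat HlB.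
      have Hdis : (0 < ecnt vj Rp e)%N -> ecnt t B1 e = 0%N.
        rewrite /ecnt cnt_gt0 => HeR; apply/eqP; rewrite -leqn0 leqNgt cnt_gt0.
        by apply/negP => HeB; move/negP: Hhas; apply; apply/hasP; exists e.
      rewrite HnFs HBc -/(ecnt vj Rp e) => Hm; exact: ar4 Hm Hdis.
  + by rewrite -HPhi addrC lerD2l.
Qed.

Lemma step H st : Good H st -> st != [ffun _ => t] -> StepOK H st.
Proof.
move=> [Fs [B Hw]] Hne; have [HF HB HH] := Hw.
case: (boolP [exists j : 'I_k, if Fs j is a :: _ then
    (ecnt t B (st (lift ord0 j), a) < nF st Fs (st (lift ord0 j), a))%N else false]).
  case/existsP => j; case Ej: (Fs j) => [//|a p] Hlt; exact: stepA Hw Ej Hlt.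
move=> HnA.
have hnA : forall j a p, Fs j = a :: p ->
    (nF st Fs (st (lift ord0 j), a) <= ecnt t B (st (lift ord0 j), a))%N.
  move=> j a p Ej; move/existsPn: HnA => /(_ j); rewrite Ej -leqNgt; exact.
have Hpos : forall j a p, Fs j = a :: p -> (0 < nF st Fs (st (lift ord0 j), a))%N.
  by move=> j a p Ej; rewrite (nF_D1 st Fs j) Ej ecnt_cons eqxx.
clear HnA.
case/lastP: B Hw HB HH hnA => [|B0 u] Hw HB HH hnA.
- have Hu : st ord0 = t by move: HB => /and3P[_ /eqP <- _].
  have [l Hl] : exists l, st l != t.
    case: (pickP (fun l => st l != t)) => [l Hl|Hall]; first by exists l.
    exfalso; move/negP: Hne; apply; apply/eqP/ffunP => l; rewrite ffunE.
    by move: (Hall l) => /negbFE/eqP.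
  case: (unliftP ord0 l) Hl => [i ->|->] Hl; last by rewrite Hu eqxx in Hl.
  case Ei: (Fs i) => [|a p].
    by move: (HF i); rewrite Ei => /and3P[_ /= /eqP Hx _]; rewrite Hx eqxx in Hl.
  by have := hnA i a p Ei; have := Hpos i a p Ei; rewrite /ecnt /=; case: (nF _ _ _).
- set eb := (last t B0, u).
  case: (ltnP (nF st Fs eb) (ecnt t (rcons B0 u) eb)) => Hb.
    exact: stepB Hw Hb.
  have Hb1 : (0 < ecnt t (rcons B0 u) eb)%N.
    by rewrite -cats1 ecnt_cat ecnt_cons eqxx addnCA add1n.
  have Hs : (0 < nF st Fs eb)%N by apply: leq_trans Hb.
  have [j Hj] : exists j, (0 < ecnt (st (lift ord0 j)) (Fs j) eb)%N.
    case: (pickP (fun j => 0 < ecnt (st (lift ord0 j)) (Fs j) eb)%N) => [j Hj|Hall].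
      by exists j.
    move: Hs; rewrite /nF big1 // => j _; move: (Hall j) => /negbT.
    by rewrite -leqNgt leqn0 => /eqP.
  move: Hj; rewrite /ecnt cnt_gt0 => Hj.
  case Ej: (Fs j) Hj => [//|a p] Hj.
  apply: (stepC Hw Ej).
    have [_ Hum] := pe_mem Hj.
    by move: HB => /and3P[_ /eqP <- _]; rewrite last_rcons Ej.
  have := hnA j a p Ej; have := Hpos j a p Ej => H1 H2.
  have : (0 < ecnt t (rcons B0 u) (st (lift ord0 j), a))%N by apply: leq_trans H2.
  by rewrite /ecnt cnt_gt0 => /pe_mem [].
Qed.

Lemma main m : forall H st, (mu H <= m)%N -> Good H st ->
  exists2 c, tplay E w st [ffun _ => t] c & c <= Phi H.
Proof.
elim: m => [|m IH] H st Hm HG.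
  case: (eqVneq st [ffun _ => t]) => [->|Hne].
    by exists 0; [exact: tp_nil | exact: Phi_ge0].
  have [st' [c1 [H' [Hmv HG' Hc Hmu]]]] := step HG Hne.
  by move: (leq_trans Hmu Hm).
case: (eqVneq st [ffun _ => t]) => [->|Hne].
  by exists 0; [exact: tp_nil | exact: Phi_ge0].
have [st' [c1 [H' [Hmv HG' Hc Hmu]]]] := step HG Hne.
have [c Hp Hc'] := IH H' st' (leq_trans Hmu Hm) HG'.
exists (c1 + c); first exact: tp_cons Hmv Hp.
by apply: le_trans Hc; rewrite lerD2l.
Qed.

End Game.

Local Open Scope ring_scope.
Unset Implicit Arguments.

Lemma natr_maxn (R : realFieldType) (a b : nat) :
  ((maxn a b)%:R : R) = Num.max (a%:R : R) b%:R.
Proof.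
case: (leqP a b) => h.
  by rewrite max_r // ler_nat.
by rewrite max_l // ler_nat ltnW.
Qed.

Theorem lemma6 (R : realFieldType) (V : finType) (E : {set V * V})
    (w : V -> V -> R) (k : nat) (s t : V) :
  (forall u v, (u, v) \in E -> 0 <= w u v) ->
  forall c, scss_feasible_cost E w k s t c ->
  exists2 c', token_feasible_cost E w k s t c' & c' <= c.
Proof.
move=> hw c [F [B [HF HB ->]]].
pose H := fun e => maxn #|[set i | e \in path_edges s (F i)]| (e \in path_edges t B).
have HG : Good E t H [ffun _ : 'I_k.+1 => s].
  exists F, B; split.
  + by move=> i; rewrite ffunE.
  + by rewrite ffunE.
  + move=> e; rewrite /H; apply: eq_leq; congr maxn.
      rewrite /nF cardsE -sum1_card [RHS]big_mkcond /=; apply: eq_bigr => i _.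
      rewrite ffunE /ecnt count_uniq_mem ?pe_uniq //; last by case/and3P: (HF i).
    by rewrite /ecnt count_uniq_mem ?pe_uniq //; case/and3P: HB.
have [c' Hp Hc'] := main hw (leqnn _) HG.
exists c' => //; apply: (le_trans Hc'); rewrite /Phi /scss_cost le_eqVlt; apply/orP; left.
apply/eqP; apply: eq_bigr => e _; by rewrite /H natr_maxn.
Qed.
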